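(* Let $G=\{g_1,\dots,g_m\}$ be a finite group and let $\Gamma=(V,E)$ be a finite digraph (loops and multiple arcs allowed) with a voltage assignment $\alpha:E\to G$. Let $B_G$ be the $G$-representation matrix of $(\Gamma,\alpha)$, and define its powers by $B_G^{0}$ with $(B_G^0)_{uv}=\delta_{uv}e_1$ where $g_1$ is the identity and $e_1$ the corresponding unit vector, and $(B_G^{\ell+1})_{uv}=\sum_{w\in V}(B_G^{\ell})_{uw}\ast_G (B_G)_{wv}$. If $(B_G^\ell)_{uv}=(\beta_1,\dots,\beta_m)$, then for every $i=1,\dots,m$ and every $h\in G$ there are exactly $\beta_i$ walks of length $\ell$ in the lift $\Gamma^\alpha$ from vertex $(u,h)$ to vertex $(v,hg_i)$.
   Context: The lift $\Gamma^\alpha$ has vertex set $V\times G$, and for each arc $uv\in E$ and $g\in G$ an arc from $(u,g)$ to $(v,g\alpha(uv))$. For $a,b\in\mathbb{N}^m$ (indexed by the elements of $G$), their $G$-convolution is $a\ast_G b\in\mathbb{N}^m$ with $(a\ast_G b)_i=\sum_{j,k:\,g_jg_k=g_i}a_jb_k$. The $G$-representation matrix $B_G$ is the $V\times V$ matrix whose $uv$-entry is the vector $b_{uv}\in\mathbb{N}^m$ with $(b_{uv})_i$ equal to the number of arcs from $u$ to $v$ with voltage $g_i$. *)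

(* Defs.v *)
From mathcomp Require Import all_boot all_fingroup.
Set Implicit Arguments. Unset Strict Implicit. Unset Printing Implicit Defensive.
Local Open Scope group_scope.

(* A finite digraph with loops and multiple arcs: vertex type V, arc type E,
   tail/head maps src/tgt, voltage assignment alpha : E -> gT. The group G is
   the whole finite group gT. Vectors in N^m indexed by the elements of G are
   finite functions {ffun gT -> nat}. *)

Section Voltage.
Variables (gT : finGroupType) (V E : finType) (src tgt : E -> V) (alpha : E -> gT).

Definition gconv (a b : {ffun gT -> nat}) : {ffun gT -> nat} :=
  [ffun x => \sum_(y : gT) \sum_(z : gT | (y * z)%g == x) a y * b z]%N.

Definition repmx (u v : V) : {ffun gT -> nat} :=
  [ffun g => #|[set e : E | (src e == u) && (tgt e == v) && (alpha e == g)]|].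

Fixpoint repmx_pow (l : nat) (u v : V) : {ffun gT -> nat} :=
  match l with
  | 0 => [ffun g => nat_of_bool ((u == v) && (g == 1))]
  | l'.+1 => [ffun g => \sum_(w : V) gconv (repmx_pow l' u w) (repmx w v) g]%N
  end.

(* The lift Gamma^alpha: vertices V * gT; for each arc e and g an arc (e, g)
   from (src e, g) to (tgt e, g * alpha e). Arcs of the lift are E * gT. *)
Definition lift_src (a : E * gT) : V * gT := (src a.1, a.2).
Definition lift_tgt (a : E * gT) : V * gT := (tgt a.1, a.2 * alpha a.1).

Fixpoint is_walk (x : V * gT) (s : seq (E * gT)) (y : V * gT) : bool :=
  match s with
  | [::] => x == y
  | a :: s' => (lift_src a == x) && is_walk (lift_tgt a) s' y
  end.

Definition num_walks (l : nat) (x y : V * gT) : nat :=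
  #|[set t : l.-tuple (E * gT) | is_walk x t y]|.
End Voltage.

(* Main.v *)
Require Import Defs.
From mathcomp Require Import all_boot all_fingroup.
Set Implicit Arguments. Unset Strict Implicit.

Lemma sum_rcons (T : finType) n (F : n.+1.-tuple T -> nat) :
  \sum_(t : n.+1.-tuple T) F t = \sum_(t : n.-tuple T) \sum_(a : T) F [tuple of rcons t a].
Proof.
rewrite pair_big /=.
rewrite (reindex (fun p : n.-tuple T * T => [tuple of rcons p.1 p.2])) //=.
exists (fun t : n.+1.-tuple T => ([tuple of belast (thead t) (behead t)], last (thead t) (behead t))).
- move=> [t a] _ /=.
  have E : rcons t a = thead [tuple of rcons t a] :: behead [tuple of rcons t a].
    exact: (congr1 val (tuple_eta [tuple of rcons t a])).
  have := E; rewrite lastI => /rcons_inj [E1 E2].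
  by congr pair; [apply: val_inj; rewrite /= -E1 | rewrite -E2].
- move=> t _; apply: val_inj => /=.
  rewrite -lastI; exact: (esym (congr1 val (tuple_eta t))).
Qed.

Section S.
Variables (gT : finGroupType) (V E : finType) (src tgt : E -> V) (alpha : E -> gT).

Lemma is_walk_rcons x s a y :
  is_walk src tgt alpha x (rcons s a) y =
  is_walk src tgt alpha x s (lift_src src a) && (lift_tgt tgt alpha a == y).
Proof.
elim: s x => [|b s IH] x /=; first by rewrite eq_sym.
by rewrite IH andbA.
Qed.

Lemma num_walksE l x y :
  num_walks src tgt alpha l x y = \sum_(t : l.-tuple (E * gT)) is_walk src tgt alpha x t y.
Proof.
rewrite /num_walks -sum1_card big_mkcond /=.
by apply: eq_bigr => t _; rewrite inE; case: is_walk.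
Qed.

Lemma num_walksS l x y :
  num_walks src tgt alpha l.+1 x y =
  \sum_(a : E * gT) (lift_tgt tgt alpha a == y) * num_walks src tgt alpha l x (lift_src src a).
Proof.
rewrite num_walksE sum_rcons exchange_big /=.
apply: eq_bigr => a _; rewrite num_walksE big_distrr /=.
apply: eq_bigr => t _; rewrite is_walk_rcons.
by case: is_walk; case: eqP.
Qed.
Lemma repmx_powS l u v g :
  repmx_pow src tgt alpha l.+1 u v g =
  \sum_(e : E) (tgt e == v) * repmx_pow src tgt alpha l u (src e) (g * (alpha e)^-1)%g.
Proof.
rewrite /= ffunE.
rewrite (partition_big src xpredT) //=.
apply: eq_bigr => w _.
set P := repmx_pow src tgt alpha l u w.
rewrite /gconv ffunE.
transitivity (\sum_(z : gT) P (g * z^-1)%g * repmx src tgt alpha w v z).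
  rewrite (exchange_big_dep xpredT) //=.
  apply: eq_bigr => z _.
  rewrite (big_pred1 (g * z^-1)%g) // => y /=.
  by apply/eqP/eqP => [<-|->]; rewrite ?mulgK ?mulgKV.
rewrite [RHS](partition_big alpha xpredT) //=.
apply: eq_bigr => z _.
rewrite /repmx ffunE -sum1_card big_distrr /= muln1.
rewrite [RHS]big_mkcond [LHS]big_mkcond /=.
apply: eq_bigr => e _; rewrite inE.
case: (src e =P w) => [->|] //=; case: (alpha e =P z) => [->|] /=; rewrite ?andbF //.
by case: (tgt e == v); rewrite ?mul1n ?mul0n.
Qed.
End S.

Local Open Scope group_scope.

Theorem lemma4p2 (gT : finGroupType) (V E : finType) (src tgt : E -> V)
  (alpha : E -> gT) (l : nat) (u v : V) (g h : gT) :
  num_walks src tgt alpha l (u, h) (v, h * g) = repmx_pow src tgt alpha l u v g.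
Proof.
elim: l v g => [|l IH] v g.
  rewrite num_walksE (big_pred1 [tuple]); last by move=> t; apply/esym/eqP; exact: tuple0.
  rewrite /= ffunE xpair_eqE.
  have -> : (h == h * g) = (g == 1) by apply/eqP/eqP => [/esym/(canRL (mulKg h))|->]; rewrite ?mulVg ?mulg1.
  done.
rewrite num_walksS repmx_powS.
rewrite -(pair_big xpredT xpredT (fun e k => ((lift_tgt tgt alpha (e, k) == (v, (h * g)%g)) *
   num_walks src tgt alpha l (u, h) (lift_src src (e, k)))%N)) /=.
apply: eq_bigr => e _.
rewrite (bigD1 (h * (g * (alpha e)^-1))) //= big1 ?addn0.
  rewrite /lift_tgt /lift_src /= IH xpair_eqE mulgA mulgKV eqxx andbT.
  done.
move=> k /negPf kN; rewrite /lift_tgt /= xpair_eqE.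
suff -> : (k * alpha e == h * g) = false by rewrite andbF.
apply/negbTE/negP => /eqP H; move: kN; rewrite mulgA -H mulgK eqxx //.
Qed.
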